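(* Let $R$ be a unital regular $K$-algebra, $J$ an ideal of $R$, and $T$ a matricial subalgebra of $R$ such that $R = T \oplus J$ as $K$-vector spaces. Then for every finite subset $Y \subseteq J$ there is an idempotent $e \in J$ such that $Y \subseteq eJe$ and $et = te$ for all $t \in T$.
   Context: $K$ is a field. All algebras are associative $K$-algebras; ideals are two-sided ring ideals that are $K$-subspaces. A ring is regular if for every $x$ there is $y$ with $xyx=x$. A $K$-algebra is matricial if it is isomorphic to $\prod_{i=1}^k M_{n_i}(K)$ for some positive integers $n_1,\dots,n_k$. The subalgebra $T$ need not share the identity of $R$. *)

(* Defs.v *)
From mathcomp Require Import all_boot all_algebra.
Set Implicit Arguments. Unset Strict Implicit. Unset Printing Implicit Defensive.
Import GRing.Theory.
Local Open Scope ring_scope.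

Definition regular_ring (R : pzRingType) : Prop :=
  forall x : R, exists y : R, x * y * x = x.

Definition is_ideal (K : fieldType) (R : algType K) (J : {pred R}) : Prop :=
  [/\ 0 \in J,
      (forall x y, x \in J -> y \in J -> x + y \in J),
      (forall (a : K) x, x \in J -> a *: x \in J) &
      (forall r x, x \in J -> r * x \in J /\ x * r \in J)].

(* T is a matricial subalgebra of R (not necessarily containing 1_R):
   T is the image of an injective (non-unital) K-algebra homomorphism
   f : prod_{i<k} M_{n_i}(K) -> R, with all n_i positive. *)
Definition matricial_subalgebra (K : fieldType) (R : algType K) (T : {pred R})
  : Prop :=
  exists (k : nat) (n : 'I_k -> nat)
         (f : (forall i : 'I_k, 'M[K]_(n i)) -> R),
    (forall i, (0 < n i)%N) /\
    (forall A B, f (fun i => A i + B i) = f A + f B) /\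
    (forall (a : K) A, f (fun i => a *: A i) = a *: f A) /\
    (forall A B, f (fun i => A i *m B i) = f A * f B) /\
    (forall A B, f A = f B -> forall i, A i = B i) /\
    (forall r, r \in T <-> exists A, f A = r).

Definition direct_sum_decomp (K : fieldType) (R : algType K) (T J : {pred R})
  : Prop :=
  (forall r : R, exists t, exists j, [/\ t \in T, j \in J & r = t + j]) /\
  (forall x : R, x \in T -> x \in J -> x = 0).

(* Main.v *)
Require Import Defs.
From mathcomp Require Import all_boot all_algebra.
From Stdlib Require Import FunctionalExtensionality.
Set Implicit Arguments. Unset Strict Implicit. Unset Printing Implicit Defensive.
Import GRing.Theory.
Local Open Scope ring_scope.

Definition ideal_like (R : pzRingType) (J : {pred R}) :=
  [/\ 0 \in J, (forall x y, x \in J -> y \in J -> x - y \in J) &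
      (forall r x, x \in J -> r * x \in J /\ x * r \in J)].

Lemma left_ext (R : pzRingType) (J : {pred R}) :
  (forall x : R, exists y : R, x * y * x = x) -> ideal_like J ->
  forall P e x : R, P * P = P -> e \in J -> e * e = e -> P * e = e -> e * P = e ->
  x \in J -> P * x = x ->
  exists g, [/\ g \in J, g * g = g, P * g = g, g * P = g &
                [/\ g * e = e, e * g = e & g * x = x]].
Proof.
move=> reg [J0 JB JM] P e x PP eJ ee Pe eP xJ Px.
set x1 := x - e * x.
have [y1 hy1] := reg x1.
have x1J : x1 \in J by apply: (JB) => //; case: (JM e x xJ).
have Px1 : P * x1 = x1 by rewrite /x1 mulrBr Px mulrA Pe.
have ex1 : e * x1 = 0 by rewrite /x1 mulrBr mulrA ee subrr.
set p := x1 * y1 * P.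
have pJ : p \in J by rewrite /p; case: (JM (y1 * P) x1 x1J) => _; rewrite mulrA.
have px1 : p * x1 = x1 by rewrite /p -mulrA Px1.
have pp : p * p = p by rewrite /p -!mulrA (mulrA P) Px1 !mulrA hy1.
have ep : e * p = 0 by rewrite /p !mulrA ex1 !mul0r.
have Pp : P * p = p by rewrite /p !mulrA Px1.
have pP : p * P = p by rewrite /p -mulrA PP.
clearbody p.
set q := p - p * e.
have qe : q * e = 0 by rewrite /q mulrBl -mulrA ee subrr.
have eq0 : e * q = 0 by rewrite /q mulrBr ep mulrA ep mul0r subrr.
have qq : q * q = q.
  by rewrite {1}/q mulrBl -mulrA eq0 mulr0 subr0 /q mulrBr mulrA pp.
have JD : forall a b, a \in J -> b \in J -> a + b \in J.
  move=> a b aJ bJ; have -> : a + b = a - (0 - b) by rewrite sub0r opprK.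
  by apply: (JB) => //; apply: (JB).
have qJ : q \in J by apply: (JB) => //; case: (JM e p pJ).
have qx : q * x = x1 by rewrite /q mulrBl -mulrA -mulrBr px1.
have Pq : P * q = q by rewrite /q mulrBr mulrA Pp.
have qP : q * P = q by rewrite /q mulrBl -mulrA eP pP.
clearbody q.
exists (e + q); split.
- exact: JD.
- by rewrite mulrDl !mulrDr ee eq0 qe qq addr0 add0r.
- by rewrite mulrDr Pe Pq.
- by rewrite mulrDl eP qP.
split.
- by rewrite mulrDl ee qe addr0.
- by rewrite mulrDr ee eq0 addr0.
- by rewrite mulrDl qx /x1 addrC subrK.
Qed.

Lemma right_ext (R : pzRingType) (J : {pred R}) :
  (forall x : R, exists y : R, x * y * x = x) -> ideal_like J ->
  forall P e x : R, P * P = P -> e \in J -> e * e = e -> P * e = e -> e * P = e ->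
  x \in J -> x * P = x ->
  exists g, [/\ g \in J, g * g = g, P * g = g, g * P = g &
                [/\ g * e = e, e * g = e & x * g = x]].
Proof.
move=> reg [J0 JB JM] P e x PP eJ ee Pe eP xJ xP.
have := @left_ext (R^c) J _ _ P e x PP eJ ee eP Pe xJ xP.
case.
- move=> z; have [y hy] := reg z; exists y; exact: (etrans (mulrA (z : R) y z) hy).
- split => // r z zJ; have [h1 h2] := JM r z zJ; by split.
move=> g [gJ gg Pg gP [ge eg gx]]; exists g; by split.
Qed.

Lemma local_units (R : pzRingType) (J : {pred R}) :
  (forall x : R, exists y : R, x * y * x = x) -> ideal_like J ->
  forall (P : R) (L Rr : seq R), P * P = P ->
  (forall x, x \in L -> x \in J /\ P * x = x) ->
  (forall x, x \in Rr -> x \in J /\ x * P = x) ->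
  exists g, [/\ g \in J, g * g = g, P * g = g, g * P = g &
     (forall x, x \in L -> g * x = x) /\ (forall x, x \in Rr -> x * g = x)].
Proof.
move=> reg hJ P L Rr PP HL HR.
have hJ' := hJ; case: hJ' => J0 JB JM.
have [g0 [g0J g0g Pg0 g0P g0L]] : exists g, [/\ g \in J, g * g = g, P * g = g, g * P = g &
     (forall x, x \in L -> g * x = x)].
  elim: L HL => [|x L IH] HL.
    by exists 0; split; rewrite ?mulr0 ?mul0r.
  have [|g [gJ gg Pg gP gL]] := IH.
    by move=> y yL; apply: HL; rewrite inE yL orbT.
  have [xJ Px] := HL x (mem_head _ _).
  have [g' [g'J g'g' Pg' g'P [g'g gg' g'x]]] := left_ext reg hJ PP gJ gg Pg gP xJ Px.
  exists g'; split => // y; rewrite inE => /orP [/eqP -> //|yL].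
  by rewrite -(gL y yL) mulrA g'g.
elim: Rr HR => [|x Rr IH] HR.
  by exists g0; split.
have [|g [gJ gg Pg gP [gL gR]]] := IH.
  by move=> y yR; apply: HR; rewrite inE yR orbT.
have [xJ xP] := HR x (mem_head _ _).
have [g' [g'J g'g' Pg' g'P [g'g gg' xg']]] := right_ext reg hJ PP gJ gg Pg gP xJ xP.
exists g'; split => //; split.
  by move=> y yL; rewrite -(gL y yL) mulrA g'g.
move=> y; rewrite inE => /orP [/eqP -> //|yR].
by rewrite -(gR y yR) -mulrA gg'.
Qed.

Section MU.
Variables (K : fieldType) (R : algType K) (k : nat) (n : 'I_k -> nat)
  (f : (forall i : 'I_k, 'M[K]_(n i)) -> R).
Hypothesis fadd : forall A B, f (fun i => A i + B i) = f A + f B.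
Hypothesis fscale : forall (a : K) A, f (fun i => a *: A i) = a *: f A.
Hypothesis fmul : forall A B, f (fun i => A i *m B i) = f A * f B.

Definition M (l : 'I_k) (i j : nat) : forall l', 'M[K]_(n l') :=
  fun l' => \matrix_(a, b) ((l == l') && (a == i :> nat) && (b == j :> nat))%:R.
Definition U l i j := f (M l i j).

Lemma sum_ind (m j : nat) (X : K) :
  \sum_(z < m) ((z == j :> nat)%:R * X) = (j < m)%N%:R * X.
Proof.
case: (ltnP j m) => hj.
  rewrite (bigD1 (Ordinal hj)) //= eqxx big1 ?addr0 // => z.
  by rewrite -val_eqE /= => /negbTE ->; rewrite mul0r.
rewrite big1 ?mul0r // => z _.
by rewrite (_ : (z == j :> nat) = false) ?mul0r //; apply/negbTE; rewrite neq_ltn (leq_trans (ltn_ord z) hj).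
Qed.

Lemma M_mul l i j l2 a b l' :
  M l i j l' *m M l2 a b l' = ((l == l2) && (j == a) && (j < n l)%N)%:R *: M l i b l'.
Proof.
apply/matrixP => x y; rewrite !mxE.
under eq_bigr => z _ do rewrite !mxE.
case: (eqVneq l l') => [->|nl]; last first.
  by rewrite big1 ?mulr0 // => z _; rewrite mul0r.
case: (eqVneq (x : nat) i) => [xi|nxi]; last first.
  by rewrite big1 ?(negbTE nxi) ?andbF ?mulr0 // => z _; rewrite mul0r.
rewrite /=.
rewrite (eq_bigr (fun z : 'I_(n l') => (z == j :> nat)%:R * ((l2 == l') && (j == a) && (y == b :> nat))%:R)); last first.
  by move=> z _; case: (eqVneq (z : nat) j) => [->|]; rewrite ?mul0r.
rewrite sum_ind -!natrM; congr (_ %:R).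
by rewrite eq_sym; case: (l' == l2); case: (j == a); case: (j < n l')%N; case: (y == b :> nat).
Qed.

Lemma f0 : f (fun _ => 0) = 0.
Proof.
have h := fadd (fun _ => 0) (fun _ => 0).
rewrite (_ : (fun i => 0 + 0) = fun _ => 0) in h; last first.
  by apply: functional_extensionality_dep => i; rewrite addr0.
by have := congr1 (fun z => z - f (fun _ => 0)) h; rewrite addrK subrr.
Qed.

Lemma f_sum (I : Type) (r : seq I) (P : pred I) (F : I -> forall l, 'M[K]_(n l)) :
  f (fun l => \sum_(x <- r | P x) F x l) = \sum_(x <- r | P x) f (F x).
Proof.
elim: r => [|x r IH].
  rewrite big_nil -f0; congr f; apply: functional_extensionality_dep => l.
  by rewrite big_nil.
rewrite big_cons -IH; case Px: (P x).
  rewrite -fadd; congr f; apply: functional_extensionality_dep => l.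
  by rewrite big_cons Px.
by congr f; apply: functional_extensionality_dep => l; rewrite big_cons Px.
Qed.

Lemma U_mul l i j l2 a b :
  U l i j * U l2 a b = if (l == l2) && (j == a) && (j < n l)%N then U l i b else 0.
Proof.
rewrite /U -fmul (_ : (fun i0 => M l i j i0 *m M l2 a b i0) =
   fun i0 => ((l == l2) && (j == a) && (j < n l)%N)%:R *: M l i b i0); last first.
  by apply: functional_extensionality_dep => l'; rewrite M_mul.
by rewrite fscale; case: ifP => _; rewrite ?scale1r ?scale0r.
Qed.

Lemma f_decomp A :
  f A = \sum_(l < k) \sum_(i < n l) \sum_(j < n l) A l i j *: U l i j.
Proof.
transitivity (f (fun l' => \sum_(l < k) \sum_(i < n l) \sum_(j < n l) A l i j *: M l i j l')).
  congr f; apply: functional_extensionality_dep => l'.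
  apply/matrixP => x y.
  rewrite summxE.
  under eq_bigr => l _ do (rewrite summxE; under eq_bigr => i _ do rewrite summxE).
  rewrite (bigD1 l') //= [X in _ + X]big1 ?addr0; last first.
    move=> l nl; apply: big1 => i _; apply: big1 => j _.
    by rewrite !mxE (negbTE nl) mulr0.
  rewrite (bigD1 x) //= [X in _ + X]big1 ?addr0; last first.
    move=> i ni; apply: big1 => j _.
    by rewrite !mxE eqxx val_eqE eq_sym (negbTE ni) mulr0.
  rewrite (bigD1 y) //= [X in _ + X]big1 ?addr0; last first.
    move=> j nj.
    by rewrite !mxE eqxx !val_eqE !eqxx eq_sym (negbTE nj) mulr0.
  by rewrite !mxE !eqxx mulr1.
rewrite f_sum; apply: eq_bigr => l _.
rewrite f_sum; apply: eq_bigr => i _.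
rewrite f_sum; apply: eq_bigr => j _.
by rewrite fscale.
Qed.

Lemma collapse (l : 'I_k) (i : nat) (X : 'I_k -> nat -> R) : (i < n l)%N ->
  \sum_(l2 < k) \sum_(a < n l2) (if (l2 == l) && (a == i :> nat) then X l2 a else 0) = X l i.
Proof.
move=> hi; rewrite (bigD1 l) //= [X in _ + X]big1 ?addr0; last first.
  by move=> l2 /negbTE nl; apply: big1 => a _; rewrite nl.
rewrite (bigD1 (Ordinal hi)) //= !eqxx /= [X in _ + X]big1 ?addr0 //.
by move=> a; rewrite -val_eqE /= => /negbTE ->; rewrite ?andbF.
Qed.

Hypothesis npos : forall l, (0 < n l)%N.

Definition p := \sum_(l < k) \sum_(i < n l) U l i i.

Lemma pU l i j : (i < n l)%N -> p * U l i j = U l i j.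
Proof.
move=> hi; rewrite /p mulr_suml -[RHS](collapse (fun l2 a => U l2 a j) hi).
apply: eq_bigr => l2 _; rewrite mulr_suml; apply: eq_bigr => a _.
by rewrite U_mul ltn_ord andbT.
Qed.

Lemma Up l i j : (j < n l)%N -> U l i j * p = U l i j.
Proof.
move=> hj; rewrite /p mulr_sumr -[RHS](collapse (fun l2 a => U l i a) hj).
apply: eq_bigr => l2 _; rewrite mulr_sumr; apply: eq_bigr => a _.
rewrite U_mul hj andbT [l2 == l]eq_sym [a == j :> nat]eq_sym.
by case: ifP => // /andP [/eqP -> /eqP ->].
Qed.

Lemma pp : p * p = p.
Proof.
by rewrite {1}/p mulr_suml; apply: eq_bigr => l _; rewrite mulr_suml; apply: eq_bigr => i _; rewrite Up.
Qed.


Definition S (c : 'I_k -> R) := \sum_(l < k) \sum_(a < n l) U l a 0 * c l * U l 0 a.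

Lemma US c l i j : (j < n l)%N -> U l i j * S c = U l i 0 * c l * U l 0 j.
Proof.
move=> hj; rewrite /S mulr_sumr -[RHS](collapse (fun l2 a => U l i 0 * c l2 * U l2 0 a) hj).
apply: eq_bigr => l2 _; rewrite mulr_sumr; apply: eq_bigr => a _.
rewrite !mulrA U_mul hj andbT [l2 == l]eq_sym [a == j :> nat]eq_sym.
by case: ifP => _; rewrite ?mul0r.
Qed.

Lemma SU c l i j : (i < n l)%N -> S c * U l i j = U l i 0 * c l * U l 0 j.
Proof.
move=> hi; rewrite /S mulr_suml -[RHS](collapse (fun l2 a => U l2 a 0 * c l2 * U l2 0 j) hi).
apply: eq_bigr => l2 _; rewrite mulr_suml; apply: eq_bigr => a _.
rewrite -mulrA U_mul ltn_ord andbT.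
by case: ifP => _; rewrite ?mulr0 ?mulrA.
Qed.

Lemma SS c : (forall l, U l 0 0 * c l = c l) -> (forall l, c l * c l = c l) ->
  S c * S c = S c.
Proof.
move=> hc cc; rewrite {1}/S mulr_suml; apply: eq_bigr => l _.
rewrite mulr_suml; apply: eq_bigr => a _.
rewrite -mulrA US // hc -!mulrA; congr (_ * _); by rewrite !mulrA cc.
Qed.

Section C0.
Variable c0 : R.
Hypothesis c0P : c0 * (1 - p) = c0.
Hypothesis Pc0 : (1 - p) * c0 = c0.

Lemma c0U l i j : (i < n l)%N -> c0 * U l i j = 0.
Proof. by move=> hi; rewrite -c0P -mulrA mulrBl mul1r pU // subrr mulr0. Qed.

Lemma Uc0 l i j : (j < n l)%N -> U l i j * c0 = 0.
Proof. by move=> hj; rewrite -Pc0 mulrA mulrBr mulr1 Up // subrr mul0r. Qed.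

Lemma c0S c : c0 * S c = 0.
Proof.
rewrite /S mulr_sumr big1 // => l _; rewrite mulr_sumr big1 // => a _.
by rewrite !mulrA c0U // !mul0r.
Qed.

Lemma Sc0 c : S c * c0 = 0.
Proof.
rewrite /S mulr_suml big1 // => l _; rewrite mulr_suml big1 // => a _.
by rewrite -mulrA Uc0 // mulr0.
Qed.

Lemma e_idem c : c0 * c0 = c0 -> (forall l, U l 0 0 * c l = c l) -> (forall l, c l * c l = c l) ->
  (c0 + S c) * (c0 + S c) = c0 + S c.
Proof.
move=> cc hc hcc.
by rewrite mulrDl !mulrDr cc c0S Sc0 SS // addr0 add0r.
Qed.

Lemma e_commU c l i j : (i < n l)%N -> (j < n l)%N ->
  (c0 + S c) * U l i j = U l i j * (c0 + S c).
Proof.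
by move=> hi hj; rewrite mulrDl mulrDr c0U // Uc0 // SU // US // !add0r.
Qed.

Lemma e_commf c A : (c0 + S c) * f A = f A * (c0 + S c).
Proof.
rewrite f_decomp mulr_sumr mulr_suml; apply: eq_bigr => l _.
rewrite mulr_sumr mulr_suml; apply: eq_bigr => i _.
rewrite mulr_sumr mulr_suml; apply: eq_bigr => j _.
by rewrite -scalerAr -scalerAl e_commU.
Qed.
End C0.

Lemma sumJ (J : {pred R}) : ideal_like J -> forall (I : Type) (r : seq I) (P : pred I) (F : I -> R),
  (forall i, P i -> F i \in J) -> \sum_(i <- r | P i) F i \in J.
Proof.
move=> [J0 JB JM] I r P F HF; apply: (big_ind (fun x => x \in J)) => //.
move=> a b aJ bJ; have -> : a + b = a - (0 - b) by rewrite sub0r opprK.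
by apply: (JB) => //; apply: (JB).
Qed.

Lemma main_aux (J : {pred R}) (Y : seq R) :
  (forall x : R, exists y, x * y * x = x) -> ideal_like J -> {subset Y <= J} ->
  exists e, [/\ e \in J, e * e = e, (forall y, y \in Y -> e * y * e = y) &
              (forall A, e * f A = f A * e)].
Proof.
move=> reg hJ HY; have hJ' := hJ; case: hJ' => J0 JB JM.
have UU l : U l 0 0 * U l 0 0 = U l 0 0 by rewrite U_mul !eqxx npos.
have Hc : forall l : 'I_k, exists cl : R,
   [/\ cl \in J, cl * cl = cl, U l 0 0 * cl = cl, cl * U l 0 0 = cl &
     ((forall (a : 'I_(n l)) y, y \in Y -> cl * (U l 0 a * y) = U l 0 a * y) /\
     (forall (a : 'I_(n l)) y, y \in Y -> (y * U l a 0) * cl = y * U l a 0))].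
  move=> l.
  have H1 : forall x, x \in allpairs (fun (a : 'I_(n l)) y => U l 0 a * y) (enum 'I_(n l)) Y ->
      x \in J /\ U l 0 0 * x = x.
    move=> x /allpairsP [[a y] [/= _ yY ->]]; split.
      by case: (JM (U l 0 a) y (HY y yY)).
    by rewrite mulrA U_mul !eqxx npos.
  have H2 : forall x, x \in allpairs (fun (a : 'I_(n l)) y => y * U l a 0) (enum 'I_(n l)) Y ->
      x \in J /\ x * U l 0 0 = x.
    move=> x /allpairsP [[a y] [/= _ yY ->]]; split.
      by case: (JM (U l a 0) y (HY y yY)).
    by rewrite -mulrA U_mul !eqxx npos.
  have [g [gJ gg Pg gP [gL gR]]] := local_units reg hJ (UU l) H1 H2.
  exists g; split => //; split => a y yY.
    by apply: gL; apply/allpairsP; exists (a, y); rewrite mem_enum.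
  by apply: gR; apply/allpairsP; exists (a, y); rewrite mem_enum.
have [c Hc'] := fin_all_exists Hc.
have P0P0 : (1 - p) * (1 - p) = 1 - p.
  by rewrite mulrBl mul1r mulrBr mulr1 pp subrr subr0.
have H1 : forall x, x \in [seq (1 - p) * y | y <- Y] -> x \in J /\ (1 - p) * x = x.
  move=> x /mapP [y yY ->]; split; last by rewrite mulrA P0P0.
  by case: (JM (1 - p) y (HY y yY)).
have H2 : forall x, x \in [seq y * (1 - p) | y <- Y] -> x \in J /\ x * (1 - p) = x.
  move=> x /mapP [y yY ->]; split; last by rewrite -mulrA P0P0.
  by case: (JM (1 - p) y (HY y yY)).
have [c0 [c0J c0c0 Pc0 c0P [c0L c0R]]] := local_units reg hJ P0P0 H1 H2.
have cJ l : c l \in J by case: (Hc' l).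
have hc l : U l 0 0 * c l = c l by case: (Hc' l).
have cc l : c l * c l = c l by case: (Hc' l).
exists (c0 + S c); split.
- have -> : c0 + S c = c0 - (0 - S c) by rewrite sub0r opprK.
  apply: (JB) => //; apply: (JB) => //; apply: sumJ => // l _; apply: sumJ => // a _.
  by case: (JM (U l a 0) (c l) (cJ l)) => h _; case: (JM (U l 0 a) _ h).
- exact: e_idem.
- move=> y yY.
  have ey : (c0 + S c) * y = y.
    rewrite mulrDl -c0P -mulrA c0L; last by apply/mapP; exists y.
    have -> : S c * y = p * y.
      rewrite /S /p !mulr_suml; apply: eq_bigr => l _; rewrite !mulr_suml.
      apply: eq_bigr => a _.
      case: (Hc' l) => _ _ _ _ [hL _].
      by rewrite -!mulrA hL // mulrA U_mul !eqxx npos.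
    by rewrite -mulrDl subrK mul1r.
  have ye : y * (c0 + S c) = y.
    rewrite mulrDr -Pc0 mulrA c0R; last by apply/mapP; exists y.
    have -> : y * S c = y * p.
      rewrite /S /p !mulr_sumr; apply: eq_bigr => l _; rewrite !mulr_sumr.
      apply: eq_bigr => a _.
      case: (Hc' l) => _ _ _ _ [_ hR].
      by rewrite !mulrA hR // -mulrA U_mul !eqxx npos.
    by rewrite -mulrDr subrK mulr1.
  by rewrite ey ye.
- by move=> A; apply: e_commf.
Qed.

End MU.

Theorem proposition3p3 (K : fieldType) (R : algType K) (J T : {pred R}) :
  regular_ring R ->
  is_ideal J ->
  matricial_subalgebra T ->
  direct_sum_decomp T J ->
  forall Y : seq R, {subset Y <= J} ->
  exists e : R,
    [/\ e \in J, e * e = e,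
        (forall y, y \in Y -> exists j, j \in J /\ y = e * j * e) &
        (forall t, t \in T -> e * t = t * e)].
Proof.
move=> reg [J0 JD JZ JM] [k [n [f [npos [fadd [fscale [fmul [_ hT]]]]]]]] _ Y HY.
have hJ : ideal_like J.
  split => // x y xJ yJ; rewrite -scaleN1r; apply: JD => //; exact: JZ.
have [e [eJ ee eY eT]] := main_aux fadd fscale fmul npos reg hJ HY.
exists e; split => //.
- by move=> y yY; exists y; split; [exact: HY | rewrite eY].
- by move=> t /hT [A <-]; exact: eT.
Qed.
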